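(* Let $A=\mathrm{diag}(G_1,\dots,G_m,[1])\in\mathbb{R}^{n\times n}$ (where the trailing block $[1]$ may or may not be present), with $G_j=\begin{bmatrix}c_j&s_j\\-s_j&c_j\end{bmatrix}$, $c_j^2+s_j^2=1$, $s_j\neq 0$, and $0<c_1<c_2<\cdots<c_m$. Let $v_0\in\mathbb{R}^n$ be a unit norm vector with $d(A,v_0)\geq 2$ and $v_0^{(1)}\neq 0$, and run the iteration ACI($1$) below. Then $\alpha_k\to c_1$ and $\beta_k\to c_1$, and every limit vector $v_*$ of $\{v_k\}$ satisfies $v_*^{(j)}=0$ for all blocks $j\geq 2$ and $\|v_*^{(1)}\|=1$.
   Context: Block partitioning: every $v\in\mathbb{R}^n$ is written as $v=[v^{(1)};\dots;v^{(m)};v^{(m+1)}]$ with $v^{(j)}\in\mathbb{R}^2$ for $j=1,\dots,m$ (conforming with the blocks $G_j$) and $v^{(m+1)}\in\mathbb{R}$ (present only if the block $[1]$ is present). ACI($1$): for $k=0,1,2,\dots$: $\widetilde w_k=(A-\alpha_kI)v_k$ with $\alpha_k=v_k^TAv_k$; $w_k=\widetilde w_k/\|\widetilde w_k\|$; $\widetilde v_{k+1}=(A^T-\beta_kI)w_k$ with $\beta_k=w_k^TAw_k$; $v_{k+1}=\widetilde v_{k+1}/\|\widetilde v_{k+1}\|$. $d(A,v)$ is the grade of $v$ w.r.t. $A$ (degree of the monic polynomial $p$ of smallest degree with $p(A)v=0$); $\|\cdot\|$ is the Euclidean norm. *)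

(* Defs.v *)
From mathcomp Require Import all_boot all_order all_algebra.
From mathcomp Require Import all_classical all_reals all_analysis.
Set Implicit Arguments. Unset Strict Implicit. Unset Printing Implicit Defensive.
Import Order.TTheory GRing.Theory Num.Theory.
Local Open Scope ring_scope.

Definition mxpeval (R : comNzRingType) (n : nat) (A : 'M[R]_n) (p : {poly R})
  : 'M[R]_n := \sum_(i < size p) p`_i *: A ^+ i.

Definition annihilates (R : comNzRingType) (n : nat) (A : 'M[R]_n)
  (v : 'cV[R]_n) (p : {poly R}) : Prop :=
  p \is monic /\ mxpeval A p *m v = 0.

Lemma mxpeval_horner (R : comNzRingType) (n : nat) (A : 'M[R]_n.+1) p :
  mxpeval A p = horner_mx A p.
Proof.
rewrite /mxpeval /horner_mx /horner_morph (horner_coef_wide _ (size_poly _ _)).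
by apply: eq_bigr => i _; rewrite coef_map /= -mul_scalar_mx.
Qed.

Definition has_annihilator_deg (R : comNzRingType) (n : nat) (A : 'M[R]_n)
  (v : 'cV[R]_n) : pred nat :=
  fun d => `[< exists p, annihilates A v p /\ size p = d.+1 >].

Lemma annihilator_exists (R : comNzRingType) (n : nat) (A : 'M[R]_n)
  (v : 'cV[R]_n) : exists d, has_annihilator_deg A v d.
Proof.
suff [d Hd] : exists d, exists p, annihilates A v p /\ size p = d.+1.
  by exists d; apply/asboolP.
case: n A v => [|n] A v.
  exists 0%N, 1; split; last by rewrite size_poly1.
  by split; [exact: monic1 | apply/matrixP => [] [] ].
exists n.+1, (char_poly A); split; last by rewrite size_char_poly.
split; first exact: char_poly_monic.
by rewrite mxpeval_horner Cayley_Hamilton mul0mx.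
Qed.

Definition grade (R : comNzRingType) (n : nat) (A : 'M[R]_n) (v : 'cV[R]_n)
  : nat :=
  ex_minn (annihilator_exists A v).

Definition vnorm (R : rcfType) (n : nat) (v : 'cV[R]_n) : R :=
  Num.sqrt (\sum_(i < n) v i 0 ^+ 2).

(* Block-diagonal A = diag(G_1,...,G_m,[1]) of size 2m+b (b = presence of [1]).
   Blocks are 0-indexed here: block j (j < m) occupies indices 2j, 2j+1 and is
   G_{j+1} = [[c j, s j]; [- s j, c j]]; index 2m (if b) carries the block [1]. *)
Definition blockA (R : comNzRingType) (m : nat) (b : bool) (c s : nat -> R)
  : 'M[R]_(2 * m + b) :=
  \matrix_(i, k)
    if (i./2 == k./2) && (i./2 < m)%N then
      (if i == k then c i./2 else if ~~ odd i then s i./2 else - s i./2)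
    else (if i == k then 1 else 0).

Definition qform (R : comNzRingType) (n : nat) (x : 'cV[R]_n) (B : 'M[R]_n)
  (y : 'cV[R]_n) : R := (x^T *m B *m y) 0 0.

Definition aci_w (R : rcfType) (n : nat) (A : 'M[R]_n) (v : 'cV[R]_n)
  : 'cV[R]_n :=
  let wt := (A - (qform v A v)%:M) *m v in (vnorm wt)^-1 *: wt.

Definition aci_next (R : rcfType) (n : nat) (A : 'M[R]_n) (v : 'cV[R]_n)
  : 'cV[R]_n :=
  let w := aci_w A v in
  let vt := (A^T - (qform w A w)%:M) *m w in (vnorm vt)^-1 *: vt.

Fixpoint aci_v (R : rcfType) (n : nat) (A : 'M[R]_n) (v0 : 'cV[R]_n) (k : nat)
  : 'cV[R]_n :=
  if k is k'.+1 then aci_next A (aci_v A v0 k') else v0.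

Definition aci_alpha (R : rcfType) n (A : 'M[R]_n) v0 k : R :=
  let v := aci_v A v0 k in qform v A v.

Definition aci_beta (R : rcfType) n (A : 'M[R]_n) v0 k : R :=
  let w := aci_w A (aci_v A v0 k) in qform w A w.

(* vstar is a limit (accumulation) point of the sequence u: every
   neighbourhood of vstar contains u k for infinitely many k.  Nbhds are taken
   entrywise (the product topology on R^n). *)
Definition seq_accum_point (R : realType) (n : nat) (u : nat -> 'cV[R]_n)
  (vstar : 'cV[R]_n) : Prop :=
  forall eps : R, 0 < eps -> forall N : nat, exists2 k : nat, (N <= k)%N &
    forall i : 'I_n, `|u k i 0 - vstar i 0| < eps.

(* Main.v *)
Require Import Defs.
From mathcomp Require Import all_boot all_order all_algebra.
From mathcomp Require Import all_classical all_reals all_analysis.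
From mathcomp Require Import ring lra zify.
Import Order.TTheory GRing.Theory Num.Theory numFieldNormedType.Exports.
Local Open Scope classical_set_scope.
Local Open Scope ring_scope.
Set Implicit Arguments. Unset Strict Implicit. Unset Printing Implicit Defensive.
Definition vf (R : rcfType) (n : nat) (v : 'cV[R]_n) (k : nat) : R :=
  if insub k is Some i then v i 0 else 0.

Lemma vfE (R : rcfType) n (v : 'cV[R]_n) (i : 'I_n) : vf v i = v i 0.
Proof. by rewrite /vf valK. Qed.

Lemma vf_ge (R : rcfType) n (v : 'cV[R]_n) k : (n <= k)%N -> vf v k = 0.
Proof. by move=> H; rewrite /vf insubF // ltnNge H. Qed.

Lemma vfZ (R : rcfType) n (v : 'cV[R]_n) t k : vf (t *: v) k = t * vf v k.
Proof. by rewrite /vf; case: insubP => [i _ _|_]; rewrite ?mxE ?mulr0. Qed.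

Lemma sum_ord_nat (R : rcfType) n (F : nat -> R) :
  \sum_(i < n) F i = \sum_(0 <= i < n) F i.
Proof. by rewrite big_mkord. Qed.

Lemma sum_pairs (R : rcfType) m (F : nat -> R) :
  \sum_(0 <= k < m.*2) F k = \sum_(0 <= j < m) (F j.*2 + F j.*2.+1).
Proof.
elim: m => [|m IH]; first by rewrite !big_geq.
rewrite doubleS !big_nat_recr //= IH.
by rewrite addrA.
Qed.

Lemma sum_single (R : rcfType) (N j0 : nat) (F : nat -> R) :
  (j0 < N)%N -> (forall j, j != j0 -> F j = 0) ->
  \sum_(0 <= j < N) F j = F j0.
Proof.
move=> Hj H; rewrite (bigD1_seq j0) /= ?mem_iota ?iota_uniq //.
  by rewrite big1 ?addr0 // => j /H.
by rewrite subn0.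
Qed.

Definition ablk (R : rcfType) (m : nat) (c s : nat -> R) (i k : nat) : R :=
  if (i./2 == k./2) && (i./2 < m)%N then
      (if i == k then c i./2 else if ~~ odd i then s i./2 else - s i./2)
  else (if i == k then 1 else 0).

Definition Bv (R : rcfType) (m : nat) (c s : nat -> R) (x : R) (f : nat -> R)
  (i : nat) : R :=
  let j := i./2 in
  if (j < m)%N then
    (if odd i then - s j * f j.*2 + (c j - x) * f j.*2.+1
     else (c j - x) * f j.*2 + s j * f j.*2.+1)
  else (1 - x) * f i.

Lemma blockAE (R : rcfType) m (b : bool) (c s : nat -> R) (i k : 'I_(2 * m + b)) :
  blockA m b c s i k = ablk m c s i k.
Proof. by rewrite mxE. Qed.

Lemma sum_extend (R : rcfType) n N (G : nat -> R) :
  (n <= N)%N -> (forall k, (n <= k)%N -> G k = 0) ->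
  \sum_(0 <= k < n) G k = \sum_(0 <= k < N) G k.
Proof.
move=> HnN HG; rewrite (@big_cat_nat _ _ _ n 0 N _ _ (leq0n n) HnN) /=.
rewrite [X in _ = _ + X]big1_seq ?addr0 // => k.
rewrite mem_iota subnKC //.
case/and3P => _ Hk _; exact: HG.
Qed.

Lemma n_le (m : nat) (b : bool) : (2 * m + b <= (m.+1).*2)%N.
Proof. case: b; rewrite /= -mul2n; lia. Qed.

Lemma ablk_pair (R : rcfType) m (c s : nat -> R) x (f : nat -> R) (i : nat) :
  ablk m c s i (i./2).*2 * f (i./2).*2 + ablk m c s i (i./2).*2.+1 * f (i./2).*2.+1
   - x * f i = Bv m c s x f i.
Proof.
rewrite /ablk /Bv; move: (odd_double_half i).
set o := odd i; set j := i./2; clearbody o j => E; subst i.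
have h1 : (j.*2.+1)./2 = j by rewrite -[j.*2.+1]/(true + j.*2)%N half_bit_double.
rewrite half_double h1 eqxx /=.
have h2 : (j.*2.+1 == j.*2) = false by elim: j {h1}.
have h3 : (j.*2 == j.*2.+1) = false by elim: j {h1 h2}.
case: o => /=; rewrite ?add1n ?add0n ?h2 ?h3 eqxx; case: ltnP => Hj /=; ring.
Qed.

Lemma ablk_off (R : rcfType) m (c s : nat -> R) (i j : nat) :
  j != i./2 -> ablk m c s i j.*2 = 0 /\ ablk m c s i j.*2.+1 = 0.
Proof.
move=> Hj.
have h1 : (j.*2.+1)./2 = j by rewrite -[j.*2.+1]/(true + j.*2)%N half_bit_double.
have e1 : (i == j.*2) = false.
  by apply/negbTE; apply: contra Hj => /eqP ->; rewrite half_double.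
have e2 : (i == j.*2.+1) = false.
  by apply/negbTE; apply: contra Hj => /eqP ->; rewrite h1.
have e3 : (i./2 == j) = false by apply/negbTE; rewrite eq_sym.
by rewrite /ablk h1 half_double e1 e2 e3.
Qed.

Lemma entry_lemma (R : rcfType) m (b : bool) (c s : nat -> R) x
   (v : 'cV[R]_(2 * m + b)) (i : 'I_(2 * m + b)) :
  ((blockA m b c s - x%:M) *m v) i 0 = Bv m c s x (vf v) i.
Proof.
rewrite mulmxBl mul_scalar_mx !mxE.
under eq_bigr => k _ do rewrite blockAE -vfE.
rewrite (@sum_ord_nat _ _ (fun k => ablk m c s i k * vf v k)).
rewrite (@sum_extend _ _ (m.+1).*2) ?n_le; last by move=> k Hk; rewrite vf_ge ?mulr0.
rewrite sum_pairs (@sum_single _ _ (i./2)).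
- by rewrite -vfE -ablk_pair.
- rewrite ltnS leq_half_double; have := ltn_ord i; have : (b <= 1)%N by case: (b).
  rewrite -mul2n; lia.
- by move=> j /(ablk_off m c s) [-> ->]; rewrite !mul0r addr0.
- by [].
Qed.

Definition Pb (R : rcfType) n (v : 'cV[R]_n) (j : nat) : R :=
  vf v j.*2 ^+ 2 + vf v j.*2.+1 ^+ 2.

Definition gg (R : rcfType) m (c : nat -> R) (j : nat) : R :=
  if (j < m)%N then c j else 1.

Definition FF (R : rcfType) m (c : nat -> R) (j : nat) (x : R) : R :=
  1 - 2 * gg m c j * x + x ^+ 2.

Lemma half2S j : (j.*2.+1)./2 = j.
Proof. by rewrite -[j.*2.+1]/(true + j.*2)%N half_bit_double. Qed.

Lemma oddS2 j : odd j.*2.+1.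
Proof. by rewrite /= odd_double. Qed.

Lemma sumsq (R : rcfType) m (b : bool) (v : 'cV[R]_(2 * m + b)) :
  \sum_(i < 2 * m + b) v i 0 ^+ 2 = \sum_(0 <= j < m.+1) Pb v j.
Proof.
under eq_bigr => k _ do rewrite -vfE.
rewrite (@sum_ord_nat _ _ (fun k => vf v k ^+ 2)).
rewrite (@sum_extend _ _ (m.+1).*2) ?n_le //; last by move=> k Hk; rewrite vf_ge ?expr0n.
by rewrite sum_pairs.
Qed.

Lemma vf_step (R : rcfType) m (b : bool) (c s : nat -> R) x
   (v : 'cV[R]_(2 * m + b)) k :
  vf ((blockA m b c s - x%:M) *m v) k =
  if (k < 2 * m + b)%N then Bv m c s x (vf v) k else 0.
Proof.
case: ltnP => Hk; last by rewrite vf_ge.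
by rewrite -[k]/(nat_of_ord (Ordinal Hk)) vfE entry_lemma.
Qed.

Lemma P_step (R : rcfType) m (b : bool) (c s : nat -> R) x
   (v : 'cV[R]_(2 * m + b)) j :
  (forall j, (j < m)%N -> c j ^+ 2 + s j ^+ 2 = 1) ->
  Pb ((blockA m b c s - x%:M) *m v) j = FF m c j x * Pb v j.
Proof.
move=> Hcs; rewrite /Pb /FF /gg !vf_step.
case: (ltnP j m) => Hj.
  have h1 : (j.*2.+1 < 2 * m + b)%N by rewrite -mul2n; lia.
  have h2 : (j.*2 < 2 * m + b)%N by rewrite -mul2n; lia.
  rewrite h1 h2 /Bv half_double half2S Hj oddS2 odd_double /=.
  have := Hcs j Hj; set C := c j; set S := s j => E.
  apply/eqP; rewrite -subr_eq0; apply/eqP.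
  set P0 := vf v j.*2; set P1 := vf v j.*2.+1.
  have -> : ((C - x) * P0 + S * P1) ^+ 2 + (- S * P0 + (C - x) * P1) ^+ 2 -
    (1 - 2 * C * x + x ^+ 2) * (P0 ^+ 2 + P1 ^+ 2) =
    (C ^+ 2 + S ^+ 2 - 1) * (P0 ^+ 2 + P1 ^+ 2) by ring.
  by rewrite E subrr mul0r.
have E : forall k, (m <= k./2)%N ->
    (if (k < 2 * m + b)%N then Bv m c s x (vf v) k else 0) = (1 - x) * vf v k.
  move=> k Hk; case: ltnP => Hk2; last by rewrite vf_ge ?mulr0.
  by rewrite /Bv ltnNge Hk.
rewrite !E ?half_double ?half2S //; ring.
Qed.

Lemma qformE (R : rcfType) m (b : bool) (c s : nat -> R)
   (v : 'cV[R]_(2 * m + b)) :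
  qform v (blockA m b c s) v = \sum_(0 <= j < m.+1) gg m c j * Pb v j.
Proof.
have HA : forall i, (blockA m b c s *m v) i 0 = Bv m c s 0 (vf v) i.
  by move=> i; rewrite -entry_lemma mulmxBl mul_scalar_mx scale0r subr0.
rewrite /qform -mulmxA mxE.
under eq_bigr => k _ do rewrite mxE HA -vfE.
rewrite (@sum_ord_nat _ _ (fun k => vf v k * Bv m c s 0 (vf v) k)).
rewrite (@sum_extend _ _ (m.+1).*2) ?n_le //; last by move=> k Hk; rewrite vf_ge ?mul0r.
rewrite sum_pairs; apply: eq_bigr => j _.
rewrite /Bv /Pb /gg half_double half2S oddS2 odd_double /=.
by case: ltnP => _; ring.
Qed.

Lemma trA (R : rcfType) m (b : bool) (c s : nat -> R) :
  (blockA m b c s)^T = blockA m b c (fun j => - s j).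
Proof.
apply/matrixP => i k; rewrite !mxE.
case Eik: (i == k).
  by rewrite (eqP Eik) !eqxx.
have Eki : (k == i) = false by rewrite eq_sym.
rewrite Eki; case E: (i./2 == k./2); last by rewrite eq_sym E.
rewrite eq_sym E (eqP E) /=; case: ltnP => //= _.
have Hodd : odd i = ~~ odd k.
  have Hi := odd_double_half i; have Hk := odd_double_half k.
  move/eqP: E => E; rewrite E in Hi.
  have Nik : (nat_of_ord i != nat_of_ord k) by rewrite val_eqE Eik.
  move: Nik; rewrite -Hi -{2}Hk.
  rewrite oddD odd_double addbF oddb; case: (odd i); case: (odd k) => /=; rewrite ?eqxx. 1-4: by case.
by rewrite Hodd negbK; case: (odd k); rewrite ?opprK.
Qed.

Lemma vnorm_sq (R : rcfType) n (v : 'cV[R]_n) :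
  vnorm v ^+ 2 = \sum_(i < n) v i 0 ^+ 2.
Proof. by rewrite /vnorm sqr_sqrtr // sumr_ge0 // => i _; rewrite sqr_ge0. Qed.

Lemma PbZ (R : rcfType) n (v : 'cV[R]_n) t j : Pb (t *: v) j = t ^+ 2 * Pb v j.
Proof. by rewrite /Pb !vfZ; ring. Qed.

Lemma norm_step (R : rcfType) m (b : bool) (c s : nat -> R) x
   (u : 'cV[R]_(2 * m + b)) j :
  (forall j, (j < m)%N -> c j ^+ 2 + s j ^+ 2 = 1) ->
  let ut := (blockA m b c s - x%:M) *m u in
  Pb ((vnorm ut)^-1 *: ut) j =
  FF m c j x * Pb u j / \sum_(0 <= k < m.+1) FF m c k x * Pb u k.
Proof.
move=> Hcs ut; rewrite PbZ exprVn vnorm_sq sumsq.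
under eq_bigr => k _ do rewrite P_step //.
by rewrite P_step // mulrC.
Qed.
Definition Fg (R : realFieldType) (g : nat -> R) (j : nat) (x : R) : R :=
  1 - 2 * g j * x + x ^+ 2.

Definition Gok (R : realFieldType) (m : nat) (g : nat -> R) (c0 g1 : R) : Prop :=
  [/\ 0 < c0, c0 < g1, g1 <= 1, g 0%N = c0 &
      forall j, (c0 <= g j <= 1) /\ ((0 < j)%N -> g1 <= g j)].

Definition Wok (R : realFieldType) (m : nat) (p : nat -> R) : Prop :=
  [/\ forall j, 0 <= p j, \sum_(0 <= j < m.+1) p j = 1 & 0 < p 0%N].

Definition Rt (R : realFieldType) (m : nat) (p : nat -> R) : R :=
  (\sum_(0 <= j < m) p j.+1) / p 0%N.

Definition rho (R : realFieldType) (c0 g1 : R) : R := 1 - (g1 - c0) * c0.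

Lemma sumN_ge0 (R : realFieldType) (m : nat) (p : nat -> R) :
  (forall j, 0 <= p j) -> 0 <= \sum_(0 <= j < m) p j.
Proof. by move=> H; rewrite sumr_ge0. Qed.

Lemma Rt_ge0 (R : realFieldType) m (p : nat -> R) : Wok m p -> 0 <= Rt m p.
Proof.
case=> H1 _ H3; apply: divr_ge0; last exact: ltW.
by apply: sumr_ge0 => j _.
Qed.

Lemma rho_bounds (R : realFieldType) m (g : nat -> R) c0 g1 :
  Gok m g c0 g1 -> 0 <= rho c0 g1 < 1.
Proof.
case=> h1 h2 h3 _ _; rewrite /rho; apply/andP; split; nra.
Qed.

Lemma F_pos (R : realFieldType) m (g : nat -> R) c0 g1 x :
  Gok m g c0 g1 -> 0 < Fg g 0 x.
Proof.
case=> h1 h2 h3 h4 _; rewrite /Fg h4.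
have h5 := sqr_ge0 (x - c0); have h6 : c0 * c0 < 1 by nra.
nra.
Qed.

Lemma F_ge0 (R : realFieldType) m (g : nat -> R) c0 g1 x j :
  Gok m g c0 g1 -> 0 <= Fg g j x.
Proof.
case=> h1 h2 h3 h4 h5; have [/andP[h6 h7] _] := h5 j; rewrite /Fg.
have h8 := sqr_ge0 (x - g j); have h9 : g j * g j <= 1 by nra.
nra.
Qed.

Lemma F_ratio (R : realFieldType) m (g : nat -> R) c0 g1 x j :
  Gok m g c0 g1 -> c0 <= x <= 1 -> (0 < j)%N ->
  Fg g j x <= rho c0 g1 * Fg g 0 x.
Proof.
case=> h1 h2 h3 h4 h5 /andP[hx1 hx2] hj; have [/andP[h6 h7] h8] := h5 j.
have h9 := h8 hj.
rewrite /Fg /rho h4.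
have a1 : (g1 - c0) * c0 <= (g j - c0) * x.
  by apply: ler_pM; rewrite ?subr_ge0 ?lerD2r // ltW.
have a2 : 1 - 2 * c0 * x + x ^+ 2 <= 2 by nra.
have a3 : (g1 - c0) * c0 * (1 - 2 * c0 * x + x ^+ 2) <= (g1 - c0) * c0 * 2.
  by apply: ler_wpM2l => //; apply: mulr_ge0; rewrite ?subr_ge0 ltW.
rewrite -subr_ge0.
have -> : (1 - (g1 - c0) * c0) * (1 - 2 * c0 * x + x ^+ 2) -
   (1 - 2 * g j * x + x ^+ 2) =
   2 * ((g j - c0) * x) - (g1 - c0) * c0 * (1 - 2 * c0 * x + x ^+ 2) by ring.
lra.
Qed.

Lemma x_range (R : realFieldType) m (g : nat -> R) c0 g1 p :
  Gok m g c0 g1 -> Wok m p ->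
  c0 <= \sum_(0 <= j < m.+1) g j * p j <= 1.
Proof.
case=> h1 h2 h3 h4 h5 [hp1 hp2 hp3]; apply/andP; split.
  rewrite -subr_ge0 -{1}(mulr1 c0) -hp2 mulr_sumr -sumrB sumr_ge0 // => j _.
  by rewrite -mulrBl mulr_ge0 // subr_ge0; case: (h5 j) => /andP[].
rewrite -subr_ge0 -hp2 -sumrB sumr_ge0 // => j _.
by rewrite -{1}(mul1r (p j)) -mulrBl mulr_ge0 // subr_ge0; case: (h5 j) => /andP[].
Qed.

Lemma update (R : realFieldType) m (g : nat -> R) c0 g1 p q :
  Gok m g c0 g1 -> Wok m p ->
  let x := \sum_(0 <= j < m.+1) g j * p j in
  let N := \sum_(0 <= j < m.+1) Fg g j x * p j in
  (forall j, q j = Fg g j x * p j / N) ->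
  Wok m q /\ Rt m q <= rho c0 g1 * Rt m p.
Proof.
move=> HG HW x N Hq; have [hp1 hp2 hp3] := HW.
have hx := x_range HG HW; rewrite -/x in hx.
have hF0 := F_pos x HG.
have hT : 0 <= \sum_(0 <= j < m) Fg g j.+1 x * p j.+1.
  by apply: sumr_ge0 => j _; rewrite mulr_ge0 // (F_ge0 _ _ HG).
have hN : 0 < N.
  rewrite /N big_nat_recl //; apply: ltr_wpDr => //; exact: mulr_gt0.
split.
  split.
  - move=> j; rewrite Hq divr_ge0 ?mulr_ge0 //; last exact: ltW.
    exact: (F_ge0 _ _ HG).
  - under eq_bigr => j _ do rewrite Hq.
    by rewrite -mulr_suml -/N divff // gt_eqF.
  - by rewrite Hq divr_gt0 // mulr_gt0.
have E : Rt m q = (\sum_(0 <= j < m) Fg g j.+1 x * p j.+1) / (Fg g 0 x * p 0%N).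
  rewrite /Rt; under eq_bigr => j _ do rewrite Hq.
  rewrite Hq -mulr_suml; field.
  by rewrite !gt_eqF.
rewrite E.
have E2 : rho c0 g1 * Rt m p =
   (rho c0 g1 * Fg g 0 x * \sum_(0 <= j < m) p j.+1) / (Fg g 0 x * p 0%N).
  by rewrite /Rt; field; rewrite !gt_eqF.
rewrite E2; apply: ler_wpM2r; first by rewrite invr_ge0 ltW // mulr_gt0.
rewrite mulr_sumr; apply: ler_sum => j _.
rewrite mulrC [X in _ <= X]mulrC ler_wpM2l //.
by apply: (F_ratio HG).
Qed.

Lemma T_le_Rt (R : realFieldType) m (p : nat -> R) :
  Wok m p -> \sum_(0 <= j < m) p j.+1 <= Rt m p /\
             1 - p 0%N = \sum_(0 <= j < m) p j.+1.
Proof.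
case=> hp1 hp2 hp3.
have hT : 0 <= \sum_(0 <= j < m) p j.+1 by apply: sumr_ge0 => j _.
have E : 1 - p 0%N = \sum_(0 <= j < m) p j.+1.
  by rewrite -hp2 big_nat_recl // addrC addKr.
split => //.
have hp0 : p 0%N <= 1 by rewrite -subr_ge0 E.
by rewrite /Rt ler_pdivlMr // ler_piMr.
Qed.

Lemma bound_x (R : realFieldType) m (g : nat -> R) c0 g1 p :
  Gok m g c0 g1 -> Wok m p ->
  0 <= \sum_(0 <= j < m.+1) g j * p j - c0 <= Rt m p.
Proof.
move=> HG HW; have [h1 h2 h3 h4 h5] := HG; have [hp1 hp2 hp3] := HW.
have [HT _] := T_le_Rt HW.
have E : \sum_(0 <= j < m.+1) g j * p j - c0 =
         \sum_(0 <= j < m) (g j.+1 - c0) * p j.+1.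
  rewrite -{1}(mulr1 c0) -hp2 mulr_sumr -sumrB big_nat_recl // h4.
  by rewrite -mulrBl subrr mul0r add0r; apply: eq_bigr => j _; rewrite mulrBl.
rewrite E; apply/andP; split.
  apply: sumr_ge0 => j _; rewrite mulr_ge0 // subr_ge0.
  by case: (h5 j.+1) => /andP[].
apply: le_trans HT; apply: ler_sum => j _.
rewrite ler_piMl //; case: (h5 j.+1) => /andP[a1 a2] _; lra.
Qed.

Lemma bound_p (R : realFieldType) m (p : nat -> R) j :
  Wok m p -> (0 < j)%N -> (j < m.+1)%N -> p j <= Rt m p.
Proof.
move=> HW hj1 hj2; have [HT _] := T_le_Rt HW; have [hp1 _ _] := HW.
apply: le_trans HT.
rewrite (bigD1_seq j.-1) /= ?mem_iota ?iota_uniq //; last first.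
  by rewrite add0n subn0; lia.
rewrite prednK // ler_wpDr //; apply: sumr_ge0 => i _; exact: hp1.
Qed.

Lemma c_mono (R : rcfType) m (c : nat -> R) :
  (forall j, (j.+1 < m)%N -> c j < c j.+1) ->
  forall i j, (i <= j)%N -> (j < m)%N -> c i <= c j.
Proof.
move=> H i; elim=> [|j IH] hij hj.
  by rewrite leqn0 in hij; rewrite (eqP hij).
rewrite leq_eqVlt in hij; case/orP: hij => [/eqP -> //|hij].
apply: le_trans (IH hij (ltnW hj)) _; exact: ltW (H j hj).
Qed.

Lemma Gok_inst (R : rcfType) m (c s : nat -> R) :
  (0 < m)%N ->
  (forall j, (j < m)%N -> c j ^+ 2 + s j ^+ 2 = 1) ->
  (forall j, (j < m)%N -> s j != 0) ->
  0 < c 0%N ->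
  (forall j, (j.+1 < m)%N -> c j < c j.+1) ->
  Gok m (gg m c) (c 0%N) (gg m c 1).
Proof.
move=> hm hcs hs hc0 hmono.
have cle1 : forall j, (j < m)%N -> c j <= 1.
  move=> j hj; have := hcs j hj; have := c_mono hmono (leq0n j) hj.
  have := sqr_ge0 (s j); nra.
have c0lt1 : c 0%N < 1.
  have := hcs 0%N hm; have := hs 0%N hm; rewrite -sqrf_eq0 => hs0.
  have : 0 < s 0%N ^+ 2 by rewrite lt_def hs0 sqr_ge0.
  nra.
have hg1 : c 0%N < gg m c 1 /\ gg m c 1 <= 1.
  rewrite /gg; case: ltnP => h1; last by split; [exact: c0lt1 | exact: lexx].
  by split; [exact: hmono 0%N h1 | exact: cle1].
case: hg1 => hg1a hg1b.
split => //; first by rewrite /gg hm.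
move=> j; rewrite /gg; case: ltnP => hj.
  split.
    by rewrite (c_mono hmono (leq0n j) hj) cle1.
  move=> hj0; move: hg1b; rewrite /gg; case: ltnP => h1 _.
    by apply: (c_mono hmono).
  exfalso; lia.
by split => [|_]; [rewrite ltW // lexx | exact: hg1b].
Qed.

Lemma sq_le_Pb (R : rcfType) n (v : 'cV[R]_n) (i : nat) :
  vf v i ^+ 2 <= Pb v i./2.
Proof.
rewrite /Pb; move: (odd_double_half i); set j := i./2; case: (odd i) => /= <-.
  by rewrite ler_wpDl // sqr_ge0.
by rewrite ler_wpDr // sqr_ge0.
Qed.

Lemma blk0_sum (R : rcfType) m (b : bool) (u : 'cV[R]_(2 * m + b)) :
  \sum_(i < 2 * m + b | (i./2 == 0)%N) u i 0 ^+ 2 = Pb u 0.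
Proof.
rewrite big_mkcond /=.
under eq_bigr => k _ do rewrite -vfE.
rewrite (@sum_ord_nat _ _ (fun k => if (k./2 == 0)%N then vf u k ^+ 2 else 0)).
rewrite (@sum_extend _ _ (m.+1).*2) ?n_le //; last first.
  by move=> k Hk; case: ifP => // _; rewrite vf_ge // expr2 mul0r.
rewrite sum_pairs (@sum_single _ _ 0%N) //.
move=> j hj; rewrite half_double half2S; move/negbTE: hj => ->; by rewrite addr0.
Qed.

Lemma sq_close (R : realFieldType) (a a' d : R) :
  -1 <= a <= 1 -> `|a' - a| < d -> d <= 1 ->
  -(3 * d) <= a' ^+ 2 - a ^+ 2 <= 3 * d.
Proof.
move=> /andP[h1 h2]; rewrite ltr_norml => /andP[h3 h4] h5.
have -> : a' ^+ 2 - a ^+ 2 = (a' - a) * (2 * a + (a' - a)) by ring.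
set e := a' - a in h3 h4 *.
apply/andP; split; nra.
Qed.
Lemma squeeze (R : realType) (f e : nat -> R) (L : R) :
  (forall k, `|f k - L| <= e k) -> (e : R^nat) @ \oo --> (0 : R) ->
  (f : R^nat) @ \oo --> L.
Proof.
move=> Hb /cvgrPdist_lt He; apply/cvgrPdist_lt => eps heps.
apply: filterS (He eps heps) => k /=; rewrite sub0r normrN distrC => h.
exact: le_lt_trans (Hb k) (le_lt_trans (ler_norm _) h).
Qed.

Lemma evN (R : realType) (e : nat -> R) :
  (e : R^nat) @ \oo --> (0 : R) ->
  forall eps, 0 < eps -> exists N, forall k, (N <= k)%N -> e k < eps.
Proof.
move=> /cvgrPdist_lt He eps heps; have [N _ HN] := He eps heps.
exists N => k hk; have := HN k hk; rewrite /= sub0r normrN => h.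
exact: le_lt_trans (ler_norm _) h.
Qed.

Lemma geo0 (R : realType) (a z : R) : 0 <= z < 1 ->
  ((fun k => a * z ^+ k) : R^nat) @ \oo --> (0 : R).
Proof.
move=> /andP[h1 h2]; have := @cvg_geometric R a z; rewrite /geometric.
by apply; rewrite ger0_norm.
Qed.

Lemma half_step (R : rcfType) m (b : bool) (c s' : nat -> R) c0 g1
   (u : 'cV[R]_(2 * m + b)) x :
  Gok m (gg m c) c0 g1 -> (forall j, (j < m)%N -> c j ^+ 2 + s' j ^+ 2 = 1) ->
  Wok m (Pb u) -> x = \sum_(0 <= j < m.+1) gg m c j * Pb u j ->
  let ut := (blockA m b c s' - x%:M) *m u in
  Wok m (Pb ((vnorm ut)^-1 *: ut)) /\
  Rt m (Pb ((vnorm ut)^-1 *: ut)) <= rho c0 g1 * Rt m (Pb u).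
Proof.
move=> HG hcs HW -> ut; apply: (update HG HW) => j.
by rewrite /ut norm_step.
Qed.

Lemma aci_step (R : rcfType) m (b : bool) (c s : nat -> R) c0 g1
   (v : 'cV[R]_(2 * m + b)) :
  Gok m (gg m c) c0 g1 -> (forall j, (j < m)%N -> c j ^+ 2 + s j ^+ 2 = 1) ->
  Wok m (Pb v) ->
  let A := blockA m b c s in
  [/\ Wok m (Pb (aci_w A v)), Rt m (Pb (aci_w A v)) <= rho c0 g1 * Rt m (Pb v),
      Wok m (Pb (aci_next A v)) &
      Rt m (Pb (aci_next A v)) <= rho c0 g1 * Rt m (Pb (aci_w A v))].
Proof.
move=> HG hcs HW A.
have [H1 H2] := half_step HG hcs HW (qformE c s v).
have hcs' : forall j, (j < m)%N -> c j ^+ 2 + (- s j) ^+ 2 = 1.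
  by move=> j hj; rewrite sqrrN hcs.
have [H3 H4] := half_step HG hcs' H1 (qformE c s (aci_w A v)).
split => //.
- by rewrite /aci_next /= /A trA.
- by rewrite /aci_next /= /A trA.
Qed.

Lemma sq_le1 (R : realFieldType) (a : R) : a ^+ 2 <= 1 -> -1 <= a <= 1.
Proof. move=> h; apply/andP; split; nra. Qed.

Lemma final_arith (R : realFieldType) (a0 a1 b0 b1 d E T Rk ek : R) :
  E = `|b0 ^+ 2 + b1 ^+ 2 - 1| -> 0 < E -> 12 * d <= E ->
  1 - (a0 ^+ 2 + a1 ^+ 2) = T -> 0 <= T -> T <= Rk -> Rk <= ek -> ek < E / 2 ->
  -(3 * d) <= b0 ^+ 2 - a0 ^+ 2 <= 3 * d ->
  -(3 * d) <= b1 ^+ 2 - a1 ^+ 2 <= 3 * d -> False.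
Proof.
move=> hE hE0 hd h1 h2 h3 h4 h5 /andP[c1 c2] /andP[c3 c4].
have : `|b0 ^+ 2 + b1 ^+ 2 - 1| < E.
  rewrite ltr_norml; apply/andP; split; lra.
by rewrite -hE ltxx.
Qed.

Unset Implicit Arguments.

Theorem lemma4p5 (R : realType) (m : nat) (b : bool) (c s : nat -> R)
  (v0 : 'cV[R]_(2 * m + b)) :
  (0 < m)%N ->
  (forall j, (j < m)%N -> c j ^+ 2 + s j ^+ 2 = 1) ->
  (forall j, (j < m)%N -> s j != 0) ->
  0 < c 0%N ->
  (forall j, (j.+1 < m)%N -> c j < c j.+1) ->
  vnorm v0 = 1 ->
  (2 <= grade (blockA m b c s) v0)%N ->
  (exists i : 'I_(2 * m + b), (i./2 == 0)%N && (v0 i 0 != 0)) ->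
  let A := blockA m b c s in
  (aci_alpha A v0 : R^nat) @ \oo --> (c 0%N : R) /\
  (aci_beta A v0 : R^nat) @ \oo --> (c 0%N : R) /\
  (forall vstar, seq_accum_point (aci_v A v0) vstar ->
     (forall i : 'I_(2 * m + b), (i./2 != 0)%N -> vstar i 0 = 0) /\
     Num.sqrt (\sum_(i < 2 * m + b | (i./2 == 0)%N) vstar i 0 ^+ 2) = 1).
Proof.
move=> hm hcs hs hc0 hmono hnorm _ hex A.
have HG := Gok_inst hm hcs hs hc0 hmono.
have /andP[hr0 hr1] := rho_bounds HG.
set r := rho (c 0%N) (gg m c 1) in hr0 hr1.
have HW0 : Wok m (Pb v0).
  split.
  - by move=> j; rewrite /Pb addr_ge0 ?sqr_ge0.
  - by rewrite -sumsq -vnorm_sq hnorm expr1n.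
  - case: hex => i /andP[hi hv].
    have hv' : vf v0 i != 0 by rewrite vfE.
    have hi2 : (i < 2)%N by rewrite -[2%N]/(1.*2)%N -ltn_half_double (eqP hi).
    move: hv' hi2; rewrite /Pb /=; move: (nat_of_ord i) => k.
    case: k => [|[|k]] // hv' _.
      have h : 0 < vf v0 0 ^+ 2 by rewrite lt_def sqrf_eq0 hv' sqr_ge0.
      by apply: ltr_wpDr; rewrite ?sqr_ge0.
    have h : 0 < vf v0 1 ^+ 2 by rewrite lt_def sqrf_eq0 hv' sqr_ge0.
    by apply: ltr_wpDl; rewrite ?sqr_ge0.
have Hseq : forall k, Wok m (Pb (aci_v A v0 k)) /\
    Rt m (Pb (aci_v A v0 k)) <= Rt m (Pb v0) * (r ^+ 2) ^+ k.
  elim => [|k [IH1 IH2]]; first by rewrite expr0 mulr1.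
  have [W1 R1 W2 R2] := aci_step (b:=b) (s:=s) HG hcs IH1.
  split => //=.
  apply: le_trans R2 _; apply: le_trans (ler_wpM2l hr0 R1) _.
  rewrite mulrA -[r * r]expr2 [(r ^+ 2) ^+ k.+1]exprS [X in _ <= X]mulrCA.
  by apply: ler_wpM2l => //; rewrite sqr_ge0.
set e := fun k => Rt m (Pb v0) * (r ^+ 2) ^+ k.
have He : (e : R^nat) @ \oo --> (0 : R).
  apply: geo0; rewrite sqr_ge0 /=; nra.
have HRe : forall k, Rt m (Pb (aci_v A v0 k)) <= e k by move=> k; exact: (Hseq k).2.
have HRw : forall k, Rt m (Pb (aci_w A (aci_v A v0 k))) <= e k.
  move=> k; have [W1 R1 _ _] := aci_step (b:=b) (s:=s) HG hcs (Hseq k).1.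
  apply: le_trans R1 _; apply: le_trans (HRe k).
  rewrite ler_piMl //; first exact: Rt_ge0 (Hseq k).1.
  exact: ltW.
have HWw : forall k, Wok m (Pb (aci_w A (aci_v A v0 k))).
  by move=> k; have [W1 _ _ _] := aci_step (b:=b) (s:=s) HG hcs (Hseq k).1.
split.
  apply: (squeeze (e := e)) => // k.
  rewrite /aci_alpha qformE.
  have /andP[h1 h2] := bound_x HG (Hseq k).1.
  by rewrite ger0_norm //; apply: le_trans h2 (HRe k).
split.
  apply: (squeeze (e := e)) => // k.
  rewrite /aci_beta qformE.
  have /andP[h1 h2] := bound_x HG (HWw k).
  by rewrite ger0_norm //; apply: le_trans h2 (HRw k).
move=> vstar hacc.
have hn2 : (1 < 2 * m + b)%N by lia.
split.
  move=> i hi; case: (eqVneq (vstar i 0) 0) => // hne; exfalso.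
  set E := `|vstar i 0|.
  have hE : 0 < E by rewrite normr_gt0.
  have [N HN] := @evN _ _ He (E ^+ 2 / 4) ltac:(by rewrite divr_gt0 // exprn_gt0).
  have [k hk hclose] := hacc (E / 2) ltac:(by rewrite divr_gt0) N.
  have h1 := hclose i.
  set a := aci_v A v0 k i 0 in h1.
  have h2 : a ^+ 2 <= e k.
    rewrite /a -vfE; apply: le_trans (sq_le_Pb _ _) _.
    apply: le_trans (HRe k); apply: bound_p (Hseq k).1 _ _; first by rewrite lt0n.
    rewrite ltnS leq_half_double; have := ltn_ord i; have : (b <= 1)%N by case: (b).
      rewrite -mul2n; lia.
  have h3 := HN k hk.
  have h4 : E <= `|a| + `|a - vstar i 0|.
    have := ler_normB a (a - vstar i 0).
    by have -> : a - (a - vstar i 0) = vstar i 0 by ring.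
  have h5 : `|a| ^+ 2 = a ^+ 2 by rewrite real_normK // num_real.
  have h6 := normr_ge0 a.
  have h7 := normr_ge0 (a - vstar i 0).
  rewrite -h5 in h2; nra.
rewrite blk0_sum.
suff -> : Pb vstar 0 = 1 by rewrite sqrtr1.
apply/eqP; rewrite -subr_eq0; apply/negPn/negP => hne; exfalso.
set E := `|Pb vstar 0 - 1|.
have hE : 0 < E by rewrite normr_gt0.
set d := E / (E + 12).
have hd0 : 0 < d by rewrite divr_gt0 // ltr_wpDr.
have hdE : d * (E + 12) = E by rewrite divfK // gt_eqF // ltr_wpDr.
have hdE' : d * E + d * 12 = E by rewrite -mulrDr hdE.
have hdEp : 0 <= d * E by rewrite mulr_ge0 // ltW.
have hE12 : 0 < E + 12 by lra.
have hd1 : d <= 1 by rewrite /d ler_pdivrMr // mul1r; lra.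
have hd2 : 12 * d <= E by lra.
have [N HN] := @evN _ _ He (E / 2) ltac:(by rewrite divr_gt0).
have [k hk hclose] := hacc d hd0 N.
have hWk := (Hseq k).1.
have [HT E1] := T_le_Rt hWk.
have hek := HN k hk.
have hR := HRe k.
have hT0 : 0 <= \sum_(0 <= j < m) Pb (aci_v A v0 k) j.+1.
  by apply: sumr_ge0 => j _; case: hWk => h _ _; exact: h.
have hcl : forall t, (t < 2 * m + b)%N ->
   `|vf vstar t - vf (aci_v A v0 k) t| < d.
  move=> t ht; rewrite -[t]/(nat_of_ord (Ordinal ht)) !vfE distrC; exact: hclose.
have hP : Pb (aci_v A v0 k) 0 = vf (aci_v A v0 k) 0 ^+ 2 + vf (aci_v A v0 k) 1 ^+ 2 by [].
have hPs : Pb vstar 0 = vf vstar 0 ^+ 2 + vf vstar 1 ^+ 2 by [].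
have hs0 := sqr_ge0 (vf (aci_v A v0 k) 0).
have hs1 := sqr_ge0 (vf (aci_v A v0 k) 1).
have hb0 : -1 <= vf (aci_v A v0 k) 0 <= 1 by apply: sq_le1; lra.
have hb1 : -1 <= vf (aci_v A v0 k) 1 <= 1 by apply: sq_le1; lra.
have h0n : (0 < 2 * m + b)%N by apply: ltn_trans hn2.
apply: (final_arith (a0 := vf (aci_v A v0 k) 0) (a1 := vf (aci_v A v0 k) 1)
   (b0 := vf vstar 0) (b1 := vf vstar 1) (d := d) (E := E)
   (T := \sum_(0 <= j < m) Pb (aci_v A v0 k) j.+1)
   (Rk := Rt m (Pb (aci_v A v0 k))) (ek := e k)) => //.
all: first [exact: sq_close hb0 (hcl 0%N h0n) hd1 | exact: sq_close hb1 (hcl 1%N hn2) hd1 | by rewrite -E1 | by []].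
Qed.
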